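(* Let $H$ be a weak Hopf algebra, $A$ an algebra and $\pi\colon H\to A$ a linear map satisfying (PR1)–(PR5). Then the following are equivalent: (1) $\pi(h)=\pi(h_1)\pi(S(h_2))\pi(h_3)$ for all $h\in H$; (2) $\pi(1_1)\pi(S(1_2))=1_A$; (3) $\pi(S(1_1))\pi(1_2)=1_A$; (4) $\pi(S(h))=\pi(S(h_1))\pi(h_2)\pi(S(h_3))$ for all $h\in H$. Moreover, if the antipode $S$ is invertible, these are also equivalent to each of: (5) $\pi(h)=\pi(h_3)\pi(S^{-1}(h_2))\pi(h_1)$ for all $h\in H$; (6) $\pi(S^{-1}(1_2))\pi(1_1)=1_A$; (7) $\pi(1_2)\pi(S^{-1}(1_1))=1_A$.
   Context: All algebras are associative and unital over a field $\Bbbk$; Sweedler notation $\Delta(h)=h_1\otimes h_2$, $\Delta(1_H)=1_1\otimes1_2$. A weak Hopf algebra is $(H,m,u,\Delta,\varepsilon,S)$ with $H$ an algebra, $(H,\Delta,\varepsilon)$ a coalgebra, and for all $g,h,k$: $\Delta(kh)=\Delta(k)\Delta(h)$; $\varepsilon(kh_1)\varepsilon(h_2g)=\varepsilon(khg)=\varepsilon(kh_2)\varepsilon(h_1g)$; $(1\otimes\Delta(1))(\Delta(1)\otimes1)=\Delta^2(1)=(\Delta(1)\otimes1)(1\otimes\Delta(1))$; $h_1S(h_2)=\varepsilon(1_1h)1_2$; $S(h_1)h_2=1_1\varepsilon(h1_2)$; $S(h)=S(h_1)h_2S(h_3)$. Conditions, for all $h,k\in H$: (PR1) $\pi(1_H)=1_A$;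 (PR2) $\pi(h)\pi(k_1)\pi(S(k_2))=\pi(hk_1)\pi(S(k_2))$; (PR3) $\pi(h)\pi(S(k_1))\pi(k_2)=\pi(hS(k_1))\pi(k_2)$; (PR4) $\pi(h_1)\pi(S(h_2))\pi(k)=\pi(h_1)\pi(S(h_2)k)$; (PR5) $\pi(S(h_1))\pi(h_2)\pi(k)=\pi(S(h_1))\pi(h_2k)$. *)

(* Defs.v *)
(* Weak Hopf algebras over a field K, with tensors encoded
   by finite formal sums (seq of pairs) and equality in tensor powers
   expressed by the universal property (agreement under all multilinear
   maps into all K-vector spaces). *)
From HB Require Import structures.
From mathcomp Require Import all_boot all_order all_algebra.
Set Implicit Arguments. Unset Strict Implicit. Unset Printing Implicit Defensive.
Import GRing.Theory.
Local Open Scope ring_scope.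

Section WHA.
Variable K : fieldType.

Definition lin_map (U V : lmodType K) (f : U -> V) : Prop :=
  forall (a : K) (x y : U), f (a *: x + y) = a *: f x + f y.

Definition bilin (U V : lmodType K) (f : U -> U -> V) : Prop :=
  (forall y, lin_map (fun x => f x y)) /\ (forall x, lin_map (f x)).

Definition trilin (U V : lmodType K) (f : U -> U -> U -> V) : Prop :=
  (forall y z, lin_map (fun x => f x y z)) /\
  (forall x z, lin_map (fun y => f x y z)) /\
  (forall x y, lin_map (f x y)).

Variable H : algType K.
(* cop h : a formal sum  sum_i a_i (x) b_i  representing Delta(h) *)
Variable cop : H -> seq (H * H).

Definition sw2 (V : lmodType K) (f : H -> H -> V) (h : H) : V :=
  \sum_(p <- cop h) f p.1 p.2.

Definition sw3 (V : lmodType K) (f : H -> H -> H -> V) (h : H) : V :=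
  \sum_(p <- cop h) \sum_(q <- cop p.1) f q.1 q.2 p.2.

Record is_weak_hopf (eps : H -> K) (S : H -> H) : Prop := {
  wh_cop_lin : forall (V : lmodType K) (f : H -> H -> V), bilin f ->
     forall (a : K) (x y : H), sw2 f (a *: x + y) = a *: sw2 f x + sw2 f y;
  wh_eps_lin : forall (a : K) (x y : H), eps (a *: x + y) = a * eps x + eps y;
  wh_S_lin : lin_map S;
  wh_coassoc : forall (V : lmodType K) (f : H -> H -> H -> V), trilin f ->
     forall h, sw3 f h = \sum_(p <- cop h) \sum_(q <- cop p.2) f p.1 q.1 q.2;
  wh_counit_l : forall h, \sum_(p <- cop h) eps p.1 *: p.2 = h;
  wh_counit_r : forall h, \sum_(p <- cop h) eps p.2 *: p.1 = h;
  wh_cop_mul : forall (V : lmodType K) (f : H -> H -> V), bilin f ->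
     forall x y, sw2 f (x * y) =
       \sum_(p <- cop x) \sum_(q <- cop y) f (p.1 * q.1) (p.2 * q.2);
  wh_eps_l : forall x h g,
     \sum_(p <- cop h) eps (x * p.1) * eps (p.2 * g) = eps (x * h * g);
  wh_eps_r : forall x h g,
     \sum_(p <- cop h) eps (x * p.2) * eps (p.1 * g) = eps (x * h * g);
  (* (1 (x) Delta(1))(Delta(1) (x) 1) = Delta^2(1) = (Delta(1) (x) 1)(1 (x) Delta(1)) *)
  wh_unit_l : forall (V : lmodType K) (f : H -> H -> H -> V), trilin f ->
     \sum_(p <- cop 1) \sum_(q <- cop 1) f p.1 (q.1 * p.2) q.2 = sw3 f 1;
  wh_unit_r : forall (V : lmodType K) (f : H -> H -> H -> V), trilin f ->
     sw3 f 1 = \sum_(p <- cop 1) \sum_(q <- cop 1) f p.1 (p.2 * q.1) q.2;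
  wh_S_tgt : forall h,
     \sum_(p <- cop h) p.1 * S p.2 = \sum_(p <- cop 1) eps (p.1 * h) *: p.2;
  wh_S_src : forall h,
     \sum_(p <- cop h) S p.1 * p.2 = \sum_(p <- cop 1) eps (h * p.2) *: p.1;
  wh_S_S : forall h, S h = sw3 (fun x y z => S x * y * S z) h
}.

Variable A : algType K.
Variables (eps : H -> K) (S : H -> H) (pi : H -> A).

Definition PR1 : Prop := pi 1 = 1.
Definition PR2 : Prop := forall h x,
  \sum_(p <- cop x) pi h * pi p.1 * pi (S p.2) = \sum_(p <- cop x) pi (h * p.1) * pi (S p.2).
Definition PR3 : Prop := forall h x,
  \sum_(p <- cop x) pi h * pi (S p.1) * pi p.2 = \sum_(p <- cop x) pi (h * S p.1) * pi p.2.
Definition PR4 : Prop := forall h x,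
  \sum_(p <- cop h) pi p.1 * pi (S p.2) * pi x = \sum_(p <- cop h) pi p.1 * pi (S p.2 * x).
Definition PR5 : Prop := forall h x,
  \sum_(p <- cop h) pi (S p.1) * pi p.2 * pi x = \sum_(p <- cop h) pi (S p.1) * pi (p.2 * x).

End WHA.

(* Main.v *)
Require Import Defs.
From HB Require Import structures.
From mathcomp Require Import all_boot all_order all_algebra.
Import GRing.Theory.
Local Open Scope ring_scope.

Set Implicit Arguments. Unset Strict Implicit. Unset Printing Implicit Defensive.



Section Lin.
Variable K : fieldType.

Definition slin (U : lmodType K) (c : U -> K) : Prop :=
  forall (a : K) (x y : U), c (a *: x + y) = a * c x + c y.

Lemma lin0 (U V : lmodType K) (f : U -> V) : lin_map f -> f 0 = 0.
Proof.
move=> hf; have := hf 1 0 0; rewrite scaler0 add0r scale1r.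
by move/(congr1 (fun z => z - f 0)); rewrite subrr addrK => ->.
Qed.

Lemma linD (U V : lmodType K) (f : U -> V) : lin_map f -> forall x y, f (x + y) = f x + f y.
Proof. by move=> hf x y; have := hf 1 x y; rewrite !scale1r. Qed.

Lemma linZ (U V : lmodType K) (f : U -> V) : lin_map f -> forall a x, f (a *: x) = a *: f x.
Proof. by move=> hf a x; have := hf a x 0; rewrite !addr0 lin0 // addr0. Qed.

Lemma lin_sum (U V : lmodType K) (f : U -> V) : lin_map f ->
  forall (I : Type) (s : seq I) (F : I -> U), f (\sum_(i <- s) F i) = \sum_(i <- s) f (F i).
Proof. by move=> hf I s F; apply: (big_morph f (linD hf) (lin0 hf)). Qed.

Lemma slin0 (U : lmodType K) (f : U -> K) : slin f -> f 0 = 0.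
Proof.
move=> hf; have := hf 1 0 0; rewrite scaler0 add0r mul1r.
by move/(congr1 (fun z => z - f 0)); rewrite subrr addrK => ->.
Qed.

Lemma slinD (U : lmodType K) (f : U -> K) : slin f -> forall x y, f (x + y) = f x + f y.
Proof. by move=> hf x y; have := hf 1 x y; rewrite scale1r mul1r. Qed.

Lemma slinZ (U : lmodType K) (f : U -> K) : slin f -> forall a x, f (a *: x) = a * f x.
Proof. by move=> hf a x; have := hf a x 0; rewrite !addr0 slin0 // addr0. Qed.

Lemma slin_sum (U : lmodType K) (f : U -> K) : slin f ->
  forall (I : Type) (s : seq I) (F : I -> U), f (\sum_(i <- s) F i) = \sum_(i <- s) f (F i).
Proof. by move=> hf I s F; apply: (big_morph f (slinD hf) (slin0 hf)). Qed.

Lemma lin_id (U : lmodType K) : lin_map (fun x : U => x).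
Proof. by []. Qed.

Lemma lin_comp (U V W : lmodType K) (g : V -> W) (F : U -> V) :
  lin_map g -> lin_map F -> lin_map (fun x => g (F x)).
Proof. by move=> hg hF a x y; rewrite hF hg. Qed.

Lemma lin_add (U V : lmodType K) (F G : U -> V) :
  lin_map F -> lin_map G -> lin_map (fun x => F x + G x).
Proof.
move=> hF hG a x y; rewrite hF hG scalerDr.
by rewrite -!addrA; congr (_ + _); rewrite addrCA.
Qed.

Lemma lin_scalel (U V : lmodType K) (k : K) (F : U -> V) :
  lin_map F -> lin_map (fun x => k *: F x).
Proof. by move=> hF a x y; rewrite hF scalerDr !scalerA mulrC. Qed.

Lemma lin_scaler (U V : lmodType K) (c : U -> K) (v : V) :
  slin c -> lin_map (fun x => c x *: v).
Proof. by move=> hc a x y; rewrite hc scalerDl scalerA. Qed.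

Lemma lin_mulr (U : lmodType K) (R : algType K) (F : U -> R) (c : R) :
  lin_map F -> lin_map (fun x => F x * c).
Proof. by move=> hF a x y; rewrite hF mulrDl scalerAl. Qed.

Lemma lin_mull (U : lmodType K) (R : algType K) (F : U -> R) (c : R) :
  lin_map F -> lin_map (fun x => c * F x).
Proof. by move=> hF a x y; rewrite hF mulrDr scalerAr. Qed.

Lemma lin_sumf (U V : lmodType K) (I : Type) (s : seq I) (F : I -> U -> V) :
  (forall i, lin_map (F i)) -> lin_map (fun x => \sum_(i <- s) F i x).
Proof.
move=> hF a x y; rewrite scaler_sumr -big_split /=.
by apply: eq_bigr => i _; rewrite hF.
Qed.

Lemma slin_comp (U V : lmodType K) (g : V -> K) (F : U -> V) :
  slin g -> lin_map F -> slin (fun x => g (F x)).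
Proof. by move=> hg hF a x y; rewrite hF hg. Qed.

Lemma slin_mulr (U : lmodType K) (c : U -> K) (k : K) :
  slin c -> slin (fun x => c x * k).
Proof. by move=> hc a x y; rewrite hc mulrDl mulrA. Qed.

Lemma slin_mull (U : lmodType K) (c : U -> K) (k : K) :
  slin c -> slin (fun x => k * c x).
Proof. by move=> hc a x y; rewrite hc mulrDr mulrCA. Qed.

Lemma lin_bil1 (U V : lmodType K) (f : U -> U -> V) (F : U -> U) (c : U) :
  bilin f -> lin_map F -> lin_map (fun x => f (F x) c).
Proof. by case=> h1 _ hF; apply: (lin_comp (g := fun x => f x c)). Qed.

Lemma lin_bil2 (U V : lmodType K) (f : U -> U -> V) (F : U -> U) (c : U) :
  bilin f -> lin_map F -> lin_map (fun x => f c (F x)).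
Proof. by case=> _ h2 hF; apply: (lin_comp (g := f c)). Qed.

Lemma lin_tri1 (U V : lmodType K) (f : U -> U -> U -> V) (F : U -> U) (c d : U) :
  trilin f -> lin_map F -> lin_map (fun x => f (F x) c d).
Proof. by case=> h1 _ hF; apply: (lin_comp (g := fun x => f x c d)). Qed.

Lemma lin_tri2 (U V : lmodType K) (f : U -> U -> U -> V) (F : U -> U) (c d : U) :
  trilin f -> lin_map F -> lin_map (fun x => f c (F x) d).
Proof. by case=> _ [h2 _] hF; apply: (lin_comp (g := fun x => f c x d)). Qed.

Lemma lin_tri3 (U V : lmodType K) (f : U -> U -> U -> V) (F : U -> U) (c d : U) :
  trilin f -> lin_map F -> lin_map (fun x => f c d (F x)).
Proof. by case=> _ [_ h3] hF; apply: (lin_comp (g := f c d)). Qed.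

End Lin.


Section WH.
Variables (K : fieldType) (H : algType K) (cop : H -> seq (H * H))
  (eps : H -> K) (S : H -> H).
Hypothesis W : is_weak_hopf cop eps S.

Let SL : lin_map S := wh_S_lin W.
Let epsL : slin eps := wh_eps_lin W.

Lemma lin_bigcop (U V : lmodType K) (G : H * H -> V) (F : U -> H) :
  (forall b, lin_map (fun a => G (a, b))) -> (forall a, lin_map (fun b => G (a, b))) ->
  lin_map F -> lin_map (fun x => \sum_(q <- cop (F x)) G q).
Proof.
move=> h1 h2 hF a x y; rewrite hF.
have hb : bilin (fun a b => G (a, b)) by split.
have E : forall z, \sum_(p <- cop z) G (p.1, p.2) = \sum_(p <- cop z) G p
  by move=> z; apply: eq_bigr => -[].
by move: (wh_cop_lin W hb a (F x) (F y)); rewrite /sw2 !E.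
Qed.

Definition et (h : H) : H := \sum_(p <- cop 1) eps (p.1 * h) *: p.2.
Definition es (h : H) : H := \sum_(p <- cop 1) eps (h * p.2) *: p.1.

Ltac lin_hyp := eassumption.

Ltac lin_tac := cbn [fst snd]; first
  [ exact: lin_id
  | apply: lin_sumf => ?; lin_tac
  | apply: lin_bigcop; [ move=> ?; lin_tac | move=> ?; lin_tac | lin_tac ]
  | apply: lin_add; lin_tac
  | apply: lin_scalel; lin_tac
  | apply: lin_scaler; slin_tac
  | apply: lin_mulr; lin_tac
  | apply: lin_mull; lin_tac
  | apply: lin_bil1; [eassumption | lin_tac]
  | apply: lin_bil2; [eassumption | lin_tac]
  | apply: lin_tri1; [eassumption | lin_tac]
  | apply: lin_tri2; [eassumption | lin_tac]
  | apply: lin_tri3; [eassumption | lin_tac]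
  | apply: lin_comp; [ lin_hyp | lin_tac ] ]
with slin_tac := cbn [fst snd]; first
  [ apply: slin_mulr; slin_tac
  | apply: slin_mull; slin_tac
  | apply: slin_comp; [ eassumption | lin_tac ] ].

Ltac bil_tac := split => ?; lin_tac.
Ltac tri_tac := split; [|split]; move=> ? ?; lin_tac.

Lemma etL : lin_map et.
Proof. rewrite /et; lin_tac. Qed.
Lemma esL : lin_map es.
Proof. rewrite /es; lin_tac. Qed.

Ltac lin_hyp ::= first [ exact: etL | exact: esL | exact: SL | eassumption ].


Lemma bsumr (V : lmodType K) (f : H -> H -> V) : bilin f ->
  forall a (I : Type) (s : seq I) (F : I -> H), f a (\sum_(i <- s) F i) = \sum_(i <- s) f a (F i).
Proof. by case=> _ h2 a I s F; rewrite (lin_sum (h2 a)). Qed.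
Lemma bsuml (V : lmodType K) (f : H -> H -> V) : bilin f ->
  forall b (I : Type) (s : seq I) (F : I -> H), f (\sum_(i <- s) F i) b = \sum_(i <- s) f (F i) b.
Proof. by case=> h1 _ b I s F; rewrite (lin_sum (h1 b)). Qed.
Lemma bZr (V : lmodType K) (f : H -> H -> V) : bilin f -> forall a k b, f a (k *: b) = k *: f a b.
Proof. by case=> _ h2 a k b; rewrite (linZ (h2 a)). Qed.
Lemma bZl (V : lmodType K) (f : H -> H -> V) : bilin f -> forall a k b, f (k *: a) b = k *: f a b.
Proof. by case=> h1 _ a k b; rewrite (linZ (h1 b)). Qed.

Lemma CA (V : lmodType K) (f : H -> H -> H -> V) : trilin f -> forall h,
  \sum_(p <- cop h) \sum_(q <- cop p.1) f q.1 q.2 p.2 =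
  \sum_(p <- cop h) \sum_(q <- cop p.2) f p.1 q.1 q.2.
Proof. by move=> hf h; exact: (wh_coassoc W hf h). Qed.

Lemma UL (V : lmodType K) (f : H -> H -> H -> V) : trilin f ->
  \sum_(p <- cop 1) \sum_(q <- cop 1) f p.1 (q.1 * p.2) q.2 =
  \sum_(p <- cop 1) \sum_(q <- cop p.1) f q.1 q.2 p.2.
Proof. by move=> hf; exact: (wh_unit_l W hf). Qed.

Lemma UR (V : lmodType K) (f : H -> H -> H -> V) : trilin f ->
  \sum_(p <- cop 1) \sum_(q <- cop p.1) f q.1 q.2 p.2 =
  \sum_(p <- cop 1) \sum_(q <- cop 1) f p.1 (p.2 * q.1) q.2.
Proof. by move=> hf; exact: (wh_unit_r W hf). Qed.


Lemma CM (V : lmodType K) (f : H -> H -> V) : bilin f -> forall x y,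
  \sum_(p <- cop (x * y)) f p.1 p.2 =
  \sum_(p <- cop x) \sum_(q <- cop y) f (p.1 * q.1) (p.2 * q.2).
Proof. by move=> hf x y; exact: (wh_cop_mul W hf x y). Qed.

Lemma L1a (V : lmodType K) (f : H -> H -> V) : bilin f -> forall x,
  \sum_(p <- cop x) \sum_(q <- cop 1) f (p.1 * q.1) (p.2 * q.2) = \sum_(p <- cop x) f p.1 p.2.
Proof. by move=> hf x; rewrite -(wh_cop_mul W hf) mulr1. Qed.

Lemma L1b (V : lmodType K) (f : H -> H -> V) : bilin f -> forall x,
  \sum_(p <- cop 1) \sum_(q <- cop x) f (p.1 * q.1) (p.2 * q.2) = \sum_(p <- cop x) f p.1 p.2.
Proof. by move=> hf x; rewrite -(wh_cop_mul W hf) mul1r. Qed.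

Lemma L2mid (V : lmodType K) (f : H -> H -> V) : bilin f ->
  \sum_(p <- cop 1) \sum_(q <- cop 1) eps (q.1 * p.2) *: f p.1 q.2 = \sum_(p <- cop 1) f p.1 p.2.
Proof.
move=> hf.
rewrite (UL (f := fun a b c => eps b *: f a c)); last by tri_tac.
apply: eq_bigr => p _ /=; rewrite -{2}(wh_counit_r W p.1) (bsuml hf).
by apply: eq_bigr => q _; rewrite (bZl hf).
Qed.

Lemma L2a (V : lmodType K) (f : H -> H -> V) : bilin f ->
  \sum_(p <- cop 1) f p.1 (et p.2) = \sum_(p <- cop 1) f p.1 p.2.
Proof.
move=> hf; rewrite -(L2mid hf).
apply: eq_bigr => p _; rewrite /et (bsumr hf); apply: eq_bigr => q _.
by rewrite (bZr hf).
Qed.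

Lemma L2b (V : lmodType K) (f : H -> H -> V) : bilin f ->
  \sum_(p <- cop 1) f (es p.1) p.2 = \sum_(p <- cop 1) f p.1 p.2.
Proof.
move=> hf; rewrite -(L2mid hf) exchange_big.
apply: eq_bigr => p _; rewrite /es (bsuml hf); apply: eq_bigr => q _.
by rewrite (bZl hf).
Qed.

Lemma swL (V : lmodType K) (f : H -> H -> V) : bilin f ->
  lin_map (fun x => \sum_(p <- cop x) f p.1 p.2).
Proof. by move=> hf; lin_tac. Qed.

Lemma L3s (V : lmodType K) (f : H -> H -> V) : bilin f -> forall x,
  \sum_(p <- cop x) f (es p.1) p.2 = \sum_(q <- cop 1) f q.1 (x * q.2).
Proof.
move=> hf x; symmetry.
transitivity (\sum_(q <- cop 1) \sum_(r <- cop (x * q.2)) eps r.1 *: f q.1 r.2).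
  apply: eq_bigr => q _; rewrite -{1}(wh_counit_l W (x * q.2)) (bsumr hf).
  by apply: eq_bigr => r _; rewrite (bZr hf).
transitivity (\sum_(q <- cop 1) \sum_(r <- cop q.2)
  (fun a b c => \sum_(s <- cop x) eps (s.1 * b) *: f a (s.2 * c)) q.1 r.1 r.2).
  apply: eq_bigr => q _ /=.
  rewrite (CM (f := fun a b => eps a *: f q.1 b)); last by bil_tac.
  by rewrite exchange_big.
rewrite -(CA (f := fun a b c => \sum_(s <- cop x) eps (s.1 * b) *: f a (s.2 * c)));
  last by tri_tac.
rewrite -(UL (f := fun a b c => \sum_(s <- cop x) eps (s.1 * b) *: f a (s.2 * c)));
  last by tri_tac.
rewrite /=.
transitivity (\sum_(s <- cop x) \sum_(q <- cop 1)
  (fun u v => \sum_(p <- cop 1) eps (u * p.2) *: f p.1 v) (s.1 * q.1) (s.2 * q.2)).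
  rewrite /= [LHS]exchange_big [RHS]exchange_big; apply: eq_bigr => q _.
  rewrite [RHS]exchange_big; apply: eq_bigr => p _.
  by apply: eq_bigr => s _; rewrite mulrA.
rewrite (L1a (f := fun u v => \sum_(p <- cop 1) eps (u * p.2) *: f p.1 v)); last by bil_tac.
apply: eq_bigr => s _ /=; rewrite /es (bsuml hf); apply: eq_bigr => p _.
by rewrite (bZl hf).
Qed.

Lemma SSs z : S z = \sum_(r <- cop z) es r.1 * S r.2.
Proof.
rewrite (wh_S_S W z) /sw3; apply: eq_bigr => r _.
by rewrite /es -(wh_S_src W) mulr_suml.
Qed.

Lemma SSt z : S z = \sum_(r <- cop z) S r.1 * et r.2.
Proof.
rewrite (wh_S_S W z) /sw3 (CA (f := fun x y z => S x * y * S z)); last by tri_tac.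
apply: eq_bigr => r _ /=.
by rewrite /et -(wh_S_tgt W) mulr_sumr; apply: eq_bigr => q _; rewrite mulrA.
Qed.


Lemma Z (V : lmodType K) (f : H -> H -> V) : bilin f ->
  \sum_(p <- cop 1) f p.1 (S p.2) = \sum_(p <- cop 1) f p.1 (es p.2).
Proof.
move=> hf.
transitivity (\sum_(p <- cop 1) \sum_(r <- cop p.2) f p.1 (S r.1 * et r.2)).
  by apply: eq_bigr => p _; rewrite {1}(SSt p.2) (bsumr hf).
rewrite -(CA (f := fun a b c => f a (S b * et c))); last by tri_tac.
rewrite -(UL (f := fun a b c => f a (S b * et c))); last by tri_tac.
rewrite /= exchange_big.
rewrite (L2a (f := fun u v => \sum_(p <- cop 1) f p.1 (S (u * p.2) * v))); last by bil_tac.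
rewrite /= exchange_big.
rewrite (UL (f := fun a b c => f a (S b * c))); last by tri_tac.
rewrite (CA (f := fun a b c => f a (S b * c))); last by tri_tac.
by apply: eq_bigr => p _ /=; rewrite /es -(wh_S_src W) (bsumr hf).
Qed.

Lemma Z' (V : lmodType K) (f : H -> H -> V) : bilin f ->
  \sum_(p <- cop 1) f (S p.1) p.2 = \sum_(p <- cop 1) f (et p.1) p.2.
Proof.
move=> hf.
transitivity (\sum_(p <- cop 1) \sum_(r <- cop p.1) f (es r.1 * S r.2) p.2).
  by apply: eq_bigr => p _; rewrite {1}(SSs p.1) (bsuml hf).
rewrite -(UL (f := fun a b c => f (es a * S b) c)); last by tri_tac.
rewrite /=.
rewrite (L2b (f := fun u v => \sum_(q <- cop 1) f (u * S (q.1 * v)) q.2)); last by bil_tac.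
rewrite /= (UL (f := fun a b c => f (a * S b) c)); last by tri_tac.
by apply: eq_bigr => p _ /=; rewrite /et -(wh_S_tgt W) (bsuml hf).
Qed.

Lemma S1 : S 1 = 1.
Proof.
have hb : bilin (fun a b : H => eps b *: a) by bil_tac.
have E := Z' hb.
transitivity (S (\sum_(p <- cop 1) eps p.2 *: p.1)); first by rewrite (wh_counit_r W).
rewrite (lin_sum SL).
transitivity (\sum_(p <- cop 1) eps p.2 *: S p.1).
  by apply: eq_bigr => p _; rewrite (linZ SL).
rewrite E.
transitivity (et (\sum_(p <- cop 1) eps p.2 *: p.1)).
  by rewrite (lin_sum etL); apply: eq_bigr => p _; rewrite (linZ etL).
rewrite (wh_counit_r W) /et.
by under eq_bigr do rewrite mulr1; exact: (wh_counit_l W).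
Qed.

Lemma C (V : lmodType K) (f : H -> H -> V) : bilin f -> forall x,
  \sum_(p <- cop x) f p.1 (es p.2) = \sum_(q <- cop 1) f (x * q.1) (S q.2).
Proof.
move=> hf x; symmetry.
rewrite (Z (f := fun a b => f (x * a) b)); last by bil_tac.
transitivity (\sum_(q <- cop 1) \sum_(s <- cop (x * q.1)) eps s.2 *: f s.1 (es q.2)).
  apply: eq_bigr => q _; rewrite -{1}(wh_counit_r W (x * q.1)) (bsuml hf).
  by apply: eq_bigr => s _; rewrite (bZl hf).
transitivity (\sum_(q <- cop 1) \sum_(s <- cop q.1)
  (fun a b c => \sum_(t <- cop x) eps (t.2 * b) *: f (t.1 * a) (es c)) s.1 s.2 q.2).
  apply: eq_bigr => q _ /=.
  rewrite (CM (f := fun a b => eps b *: f a (es q.2))); last by bil_tac.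
  by rewrite exchange_big.
rewrite (CA (f := fun a b c => \sum_(t <- cop x) eps (t.2 * b) *: f (t.1 * a) (es c)));
  last by tri_tac.
transitivity (\sum_(t <- cop x) \sum_(p <- cop 1)
  (fun a b => \sum_(u <- cop 1) eps (b * u.2) *: f a u.1) (t.1 * p.1) (t.2 * p.2)).
  rewrite /= exchange_big; apply: eq_bigr => p _.
  rewrite exchange_big; apply: eq_bigr => t _.
  transitivity (\sum_(u <- cop 1) (\sum_(r <- cop p.2) eps (t.2 * r.1) * eps (r.2 * u.2))
     *: f (t.1 * p.1) u.1).
    under eq_bigr => r _ do rewrite /es (bsumr hf) scaler_sumr.
    rewrite exchange_big; apply: eq_bigr => u _; rewrite scaler_suml.
    by apply: eq_bigr => r _; rewrite (bZr hf) scalerA.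
  by apply: eq_bigr => u _; rewrite (wh_eps_l W).
rewrite (L1a (f := fun a b => \sum_(u <- cop 1) eps (b * u.2) *: f a u.1)); last by bil_tac.
apply: eq_bigr => t _ /=; rewrite /es (bsumr hf); apply: eq_bigr => u _.
by rewrite (bZr hf).
Qed.

Lemma I2 (V : lmodType K) (f : H -> H -> V) : bilin f -> forall x,
  \sum_(p <- cop x) f (et p.1) p.2 = \sum_(q <- cop 1) f (S q.1) (q.2 * x).
Proof.
move=> hf x; symmetry.
rewrite (Z' (f := fun a b => f a (b * x))); last by bil_tac.
transitivity (\sum_(q <- cop 1) \sum_(s <- cop (q.2 * x)) eps s.1 *: f (et q.1) s.2).
  apply: eq_bigr => q _; rewrite -{1}(wh_counit_l W (q.2 * x)) (bsumr hf).
  by apply: eq_bigr => s _; rewrite (bZr hf).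
transitivity (\sum_(q <- cop 1) \sum_(r <- cop q.2)
  (fun a b c => \sum_(t <- cop x) eps (b * t.1) *: f (et a) (c * t.2)) q.1 r.1 r.2).
  apply: eq_bigr => q _ /=.
  by rewrite (CM (f := fun a b => eps a *: f (et q.1) b)); last by bil_tac.
rewrite -(CA (f := fun a b c => \sum_(t <- cop x) eps (b * t.1) *: f (et a) (c * t.2)));
  last by tri_tac.
transitivity (\sum_(p <- cop 1) \sum_(t <- cop x)
  (fun a b => \sum_(u <- cop 1) eps (u.1 * a) *: f u.2 b) (p.1 * t.1) (p.2 * t.2)).
  apply: eq_bigr => p _ /=; rewrite exchange_big; apply: eq_bigr => t _.
  under eq_bigr => r _ do rewrite /et (bsuml hf) scaler_sumr.
  rewrite exchange_big; apply: eq_bigr => u _.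
  transitivity ((\sum_(r <- cop p.1) eps (u.1 * r.1) * eps (r.2 * t.1)) *: f u.2 (p.2 * t.2)).
    by rewrite scaler_suml; apply: eq_bigr => r _; rewrite (bZl hf) scalerA mulrC.
  by rewrite (wh_eps_l W) mulrA.
rewrite (L1b (f := fun a b => \sum_(u <- cop 1) eps (u.1 * a) *: f u.2 b)); last by bil_tac.
apply: eq_bigr => t _ /=; rewrite /et (bsuml hf); apply: eq_bigr => u _.
by rewrite (bZl hf).
Qed.

Lemma D (V : lmodType K) (f : H -> H -> V) : bilin f ->
  \sum_(p <- cop 1) f (S p.1) (S p.2) = \sum_(p <- cop 1) f p.2 p.1.
Proof.
move=> hf.
rewrite (Z' (f := fun a b => f a (S b))); last by bil_tac.
rewrite (Z (f := fun a b => f (et a) b)); last by bil_tac.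
transitivity (\sum_(q <- cop 1) \sum_(r <- cop 1) eps (q.1 * r.2) *: f q.2 r.1).
  transitivity (\sum_(p <- cop 1) \sum_(q <- cop 1) \sum_(r <- cop 1)
     (eps (q.1 * p.1) * eps (p.2 * r.2)) *: f q.2 r.1).
    apply: eq_bigr => p _; rewrite /et /es (bsuml hf); apply: eq_bigr => q _.
    rewrite (bZl hf) (bsumr hf) scaler_sumr; apply: eq_bigr => r _.
    by rewrite (bZr hf) scalerA.
  rewrite exchange_big; apply: eq_bigr => q _; rewrite exchange_big.
  by apply: eq_bigr => r _; rewrite -scaler_suml (wh_eps_l W) mulr1.
transitivity (\sum_(q <- cop 1) f q.2 (es q.1)).
  by apply: eq_bigr => q _; rewrite /es (bsumr hf); apply: eq_bigr => r _; rewrite (bZr hf).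
by rewrite (L2b (f := fun a b => f b a)); last by bil_tac.
Qed.


Lemma sw_sum (V : lmodType K) (G : H -> H -> V) : bilin G ->
  forall (I : Type) (s : seq I) (F : I -> H),
  \sum_(u <- cop (\sum_(i <- s) F i)) G u.1 u.2 = \sum_(i <- s) \sum_(u <- cop (F i)) G u.1 u.2.
Proof. by move=> hG I s F; exact: (lin_sum (swL hG)). Qed.

Lemma sw_Z (V : lmodType K) (G : H -> H -> V) : bilin G -> forall k x,
  \sum_(u <- cop (k *: x)) G u.1 u.2 = k *: \sum_(u <- cop x) G u.1 u.2.
Proof. by move=> hG k x; exact: (linZ (swL hG)). Qed.

Lemma Hs (V : lmodType K) (G : H -> H -> V) : bilin G -> forall y,
  \sum_(u <- cop (es y)) G u.1 u.2 = \sum_(q <- cop 1) G q.1 (es y * q.2).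
Proof.
move=> hG y.
transitivity (\sum_(p <- cop 1) \sum_(r <- cop p.1)
   (fun a b c => eps (y * c) *: G a b) r.1 r.2 p.2).
  rewrite /es (sw_sum hG); apply: eq_bigr => p _; rewrite (sw_Z hG).
  by rewrite scaler_sumr.
rewrite -(UL (f := fun a b c => eps (y * c) *: G a b)); last by tri_tac.
apply: eq_bigr => p _ /=; rewrite /es mulr_suml (bsumr hG).
by apply: eq_bigr => q _; rewrite -scalerAl (bZr hG).
Qed.

Lemma Ht (V : lmodType K) (G : H -> H -> V) : bilin G -> forall y,
  \sum_(u <- cop (et y)) G u.1 u.2 = \sum_(q <- cop 1) G (et y * q.1) q.2.
Proof.
move=> hG y.
transitivity (\sum_(p <- cop 1) \sum_(r <- cop p.2)
   (fun a b c => eps (a * y) *: G b c) p.1 r.1 r.2).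
  rewrite /et (sw_sum hG); apply: eq_bigr => p _; rewrite (sw_Z hG).
  by rewrite scaler_sumr.
rewrite -(CA (f := fun a b c => eps (a * y) *: G b c)); last by tri_tac.
rewrite (UR (f := fun a b c => eps (a * y) *: G b c)); last by tri_tac.
rewrite /= exchange_big; apply: eq_bigr => q _.
rewrite /et mulr_suml (bsuml hG).
by apply: eq_bigr => p _; rewrite -scalerAl (bZl hG).
Qed.

Lemma Dxz (V : lmodType K) (F : H -> H -> H -> V) : trilin F -> forall x,
  \sum_(u <- cop 1) \sum_(r <- cop (x * u.2)) F u.1 r.1 r.2 =
  \sum_(u <- cop 1) \sum_(r <- cop x) F u.1 (r.1 * u.2) r.2.
Proof.
move=> hF x.
transitivity (\sum_(u <- cop 1) \sum_(t <- cop u.2)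
  (fun a b c => \sum_(s <- cop x) F a (s.1 * b) (s.2 * c)) u.1 t.1 t.2).
  apply: eq_bigr => u _ /=.
  rewrite (CM (f := fun b c => F u.1 b c)); last by bil_tac.
  exact: exchange_big.
rewrite -(CA (f := fun a b c => \sum_(s <- cop x) F a (s.1 * b) (s.2 * c))); last by tri_tac.
rewrite -(UL (f := fun a b c => \sum_(s <- cop x) F a (s.1 * b) (s.2 * c))); last by tri_tac.
apply: eq_bigr => p _ /=; rewrite exchange_big.
rewrite -(L1a (f := fun a b => F p.1 (a * p.2) b)); last by bil_tac.
by apply: eq_bigr => s _; apply: eq_bigr => q _; rewrite mulrA.
Qed.

Lemma Dzx (V : lmodType K) (F : H -> H -> H -> V) : trilin F -> forall y,
  \sum_(u <- cop 1) \sum_(r <- cop (u.1 * y)) F r.1 r.2 u.2 =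
  \sum_(u <- cop 1) \sum_(r <- cop y) F r.1 (u.1 * r.2) u.2.
Proof.
move=> hF y.
transitivity (\sum_(u <- cop 1) \sum_(t <- cop u.1)
  (fun a b c => \sum_(s <- cop y) F (a * s.1) (b * s.2) c) t.1 t.2 u.2).
  apply: eq_bigr => u _ /=.
  by rewrite (CM (f := fun a b => F a b u.2)); last by bil_tac.
rewrite -(UL (f := fun a b c => \sum_(s <- cop y) F (a * s.1) (b * s.2) c)); last by tri_tac.
transitivity (\sum_(p <- cop 1) \sum_(s <- cop y)
  (fun a b => \sum_(q <- cop 1) F a (q.1 * b) q.2) (p.1 * s.1) (p.2 * s.2)).
  apply: eq_bigr => p _ /=; rewrite exchange_big; apply: eq_bigr => s _.
  by apply: eq_bigr => q _; rewrite mulrA.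
rewrite (L1b (f := fun a b => \sum_(q <- cop 1) F a (q.1 * b) q.2)); last by bil_tac.
by rewrite /= exchange_big.
Qed.

Lemma m12 x y : \sum_(r <- cop x) r.1 * et y * S r.2 = et (x * y).
Proof.
transitivity (\sum_(u <- cop 1) \sum_(r <- cop x)
  (fun a b c => eps (a * y) *: (b * S c)) u.1 (r.1 * u.2) r.2).
  rewrite /= /et; under eq_bigr do rewrite mulr_sumr mulr_suml.
  rewrite exchange_big; apply: eq_bigr => u _; apply: eq_bigr => r _.
  by rewrite -scalerAr -scalerAl ?mulrA.
rewrite -(Dxz (F := fun a b c => eps (a * y) *: (b * S c))); last by tri_tac.
transitivity (\sum_(u <- cop 1) eps (u.1 * y) *: et (x * u.2)).
  by apply: eq_bigr => u _; rewrite /et -(wh_S_tgt W) scaler_sumr.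
rewrite /et.
transitivity (\sum_(v <- cop 1) (\sum_(u <- cop 1) eps (v.1 * x * u.2) * eps (u.1 * y)) *: v.2).
  under eq_bigr do rewrite scaler_sumr.
  rewrite exchange_big; apply: eq_bigr => v _; rewrite scaler_suml.
  by apply: eq_bigr => u _; rewrite scalerA mulrC mulrA.
by apply: eq_bigr => v _; rewrite (wh_eps_r W) mulr1 mulrA.
Qed.

Lemma m3 x y : \sum_(q <- cop y) S q.1 * es x * q.2 = es (x * y).
Proof.
transitivity (\sum_(u <- cop 1) \sum_(q <- cop y)
  (fun a b c => eps (x * c) *: (S a * b)) q.1 (u.1 * q.2) u.2).
  rewrite /= /es; under eq_bigr do rewrite mulr_sumr mulr_suml.
  rewrite exchange_big; apply: eq_bigr => u _; apply: eq_bigr => q _.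
  by rewrite -scalerAr -scalerAl ?mulrA.
rewrite -(Dzx (F := fun a b c => eps (x * c) *: (S a * b))); last by tri_tac.
transitivity (\sum_(u <- cop 1) eps (x * u.2) *: es (u.1 * y)).
  by apply: eq_bigr => u _; rewrite /es -(wh_S_src W) scaler_sumr.
rewrite /es.
transitivity (\sum_(v <- cop 1) (\sum_(u <- cop 1) eps (x * u.2) * eps (u.1 * (y * v.2))) *: v.1).
  under eq_bigr do rewrite scaler_sumr.
  rewrite exchange_big; apply: eq_bigr => v _; rewrite scaler_suml.
  by apply: eq_bigr => u _; rewrite scalerA !mulrA.
by apply: eq_bigr => v _; rewrite (wh_eps_r W) mulr1 mulrA.
Qed.

Lemma m4 x y : es x * et y = et y * es x.
Proof.
have hT : trilin (fun a b c => eps (a * y) *: (eps (x * c) *: b)) by tri_tac.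
transitivity (\sum_(p <- cop 1) \sum_(q <- cop 1)
  (fun a b c => eps (a * y) *: (eps (x * c) *: b)) p.1 (q.1 * p.2) q.2).
  rewrite /= /es /et mulr_suml [RHS]exchange_big; apply: eq_bigr => q _.
  rewrite mulr_sumr; apply: eq_bigr => p _.
  by rewrite -scalerAl -scalerAr scalerA mulrC -scalerA.
rewrite (UL hT) (UR hT).
rewrite /= /es /et mulr_suml; apply: eq_bigr => p _; rewrite mulr_sumr.
by apply: eq_bigr => q _; rewrite -scalerAl -scalerAr.
Qed.


Lemma AM x y : S (x * y) = S y * S x.
Proof.
rewrite (SSt (x * y)) (CM (f := fun a b => S a * et b)); last by bil_tac.
transitivity (\sum_(p <- cop x) \sum_(r <- cop p.2)
  (fun a b c => \sum_(q <- cop y) \sum_(t <- cop q.2)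
      S (a * q.1) * b * t.1 * S t.2 * S c) p.1 r.1 r.2).
  apply: eq_bigr => p _ /=.
  under eq_bigr => q _ do rewrite -m12 mulr_sumr.
  rewrite exchange_big; apply: eq_bigr => r _; apply: eq_bigr => q _.
  rewrite /et -(wh_S_tgt W) mulr_sumr mulr_suml mulr_sumr.
  by apply: eq_bigr => t _; rewrite !mulrA.
rewrite -(CA (f := fun a b c => \sum_(q <- cop y) \sum_(t <- cop q.2)
      S (a * q.1) * b * t.1 * S t.2 * S c)); last by tri_tac.
transitivity (\sum_(p <- cop x) \sum_(q <- cop y) es (p.1 * q.1) * S q.2 * S p.2).
  apply: eq_bigr => p _ /=.
  transitivity (\sum_(r <- cop p.1) \sum_(q <- cop y) \sum_(t <- cop q.1)
     S (r.1 * t.1) * r.2 * t.2 * S q.2 * S p.2).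
    apply: eq_bigr => r _.
    by rewrite -(CA (f := fun a b c => S (r.1 * a) * r.2 * b * S c * S p.2)); last by tri_tac.
  rewrite exchange_big; apply: eq_bigr => q _.
  rewrite /es -(wh_S_src W) (CM (f := fun a b => S a * b)); last by bil_tac.
  rewrite !mulr_suml; apply: eq_bigr => r _; rewrite !mulr_suml; apply: eq_bigr => t _.
  by rewrite !mulrA.
transitivity (\sum_(p <- cop x) \sum_(q <- cop y) S q.1 * es p.1 * et q.2 * S p.2).
  apply: eq_bigr => p _.
  transitivity (\sum_(q <- cop y) \sum_(t <- cop q.1) S t.1 * es p.1 * t.2 * S q.2 * S p.2).
    by apply: eq_bigr => q _; rewrite -m3 !mulr_suml.
  rewrite (CA (f := fun a b c => S a * es p.1 * b * S c * S p.2)); last by tri_tac.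
  apply: eq_bigr => q _ /=; rewrite /et -(wh_S_tgt W) mulr_sumr mulr_suml.
  by apply: eq_bigr => t _; rewrite !mulrA.
transitivity (\sum_(p <- cop x) \sum_(q <- cop y) S q.1 * et q.2 * (es p.1 * S p.2)).
  apply: eq_bigr => p _; apply: eq_bigr => q _.
  by rewrite -[S q.1 * es p.1 * et q.2]mulrA m4 !mulrA.
rewrite exchange_big (SSt y) (SSs x) mulr_suml; apply: eq_bigr => q _.
by rewrite mulr_sumr.
Qed.

Lemma iv (V : lmodType K) (G : H -> H -> V) : bilin G -> forall y,
  \sum_(r <- cop y) \sum_(s <- cop r.1) \sum_(w <- cop r.2) G (S s.2 * w.1) (S s.1 * w.2) =
  \sum_(u <- cop (es y)) G u.1 u.2.
Proof.
move=> hG y.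
rewrite (CA (f := fun a b c => \sum_(w <- cop c) G (S b * w.1) (S a * w.2))); last by tri_tac.
transitivity (\sum_(r <- cop y) \sum_(s <- cop r.2) G (es s.1) (S r.1 * s.2)).
  apply: eq_bigr => r _ /=.
  rewrite -(CA (f := fun a b c => G (S a * b) (S r.1 * c))); last by tri_tac.
  by apply: eq_bigr => s _ /=; rewrite /es -(wh_S_src W) (bsuml hG).
transitivity (\sum_(r <- cop y) \sum_(q <- cop 1) G q.1 (S r.1 * (r.2 * q.2))).
  apply: eq_bigr => r _.
  by rewrite (L3s (f := fun a b => G a (S r.1 * b))); last by bil_tac.
rewrite exchange_big (Hs hG); apply: eq_bigr => q _.
rewrite /es -(wh_S_src W) mulr_suml (bsumr hG).
by apply: eq_bigr => r _; rewrite mulrA.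
Qed.

Lemma AC2 (V : lmodType K) (f : H -> H -> V) : bilin f -> forall h,
  \sum_(u <- cop (S h)) f u.1 u.2 = \sum_(p <- cop h) f (S p.2) (S p.1).
Proof.
move=> hf h.
rewrite {1}(SSs h) (sw_sum hf).
transitivity (\sum_(p <- cop h) \sum_(r <- cop p.1) \sum_(s <- cop r.1) \sum_(w <- cop r.2)
   \sum_(t <- cop (S p.2)) f (S s.2 * w.1 * t.1) (S s.1 * w.2 * t.2)).
  apply: eq_bigr => p _.
  rewrite (CM hf).
  by rewrite -(iv (G := fun a b => \sum_(t <- cop (S p.2)) f (a * t.1) (b * t.2)));
    last by bil_tac.
transitivity (\sum_(p <- cop h) \sum_(r <- cop p.1)
  (fun a b c => \sum_(s <- cop a) \sum_(v <- cop (b * S c))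
       f (S s.2 * v.1) (S s.1 * v.2)) r.1 r.2 p.2).
  apply: eq_bigr => p _; apply: eq_bigr => r _ /=; apply: eq_bigr => s _.
  rewrite (CM (f := fun a b => f (S s.2 * a) (S s.1 * b))); last by bil_tac.
  by apply: eq_bigr => w _; apply: eq_bigr => t _; rewrite !mulrA.
rewrite (CA (f := fun a b c => \sum_(s <- cop a) \sum_(v <- cop (b * S c))
       f (S s.2 * v.1) (S s.1 * v.2))); last by tri_tac.
transitivity (\sum_(p <- cop h) \sum_(s <- cop p.1) \sum_(v <- cop (et p.2))
   f (S s.2 * v.1) (S s.1 * v.2)).
  apply: eq_bigr => p _ /=; rewrite exchange_big; apply: eq_bigr => s _.
  rewrite /et -(wh_S_tgt W) (sw_sum (G := fun a b => f (S s.2 * a) (S s.1 * b))) //.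
  by bil_tac.
transitivity (\sum_(p <- cop h) \sum_(s <- cop p.1)
  (fun a b c => \sum_(q <- cop 1) f (S b * et c * q.1) (S a * q.2)) s.1 s.2 p.2).
  apply: eq_bigr => p _; apply: eq_bigr => s _ /=.
  rewrite (Ht (G := fun a b => f (S s.2 * a) (S s.1 * b))); last by bil_tac.
  by apply: eq_bigr => q _; rewrite mulrA.
rewrite (CA (f := fun a b c => \sum_(q <- cop 1) f (S b * et c * q.1) (S a * q.2)));
  last by tri_tac.
transitivity (\sum_(p <- cop h) \sum_(q <- cop 1) f (S p.2 * q.1) (S p.1 * q.2)).
  apply: eq_bigr => p _ /=; rewrite exchange_big; apply: eq_bigr => q _.
  by rewrite (SSt p.2) mulr_suml (bsuml hf).
transitivity (\sum_(p <- cop h) \sum_(q <- cop 1) f (S (q.2 * p.2)) (S (q.1 * p.1))).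
  apply: eq_bigr => p _.
  rewrite -(D (f := fun a b => f (S p.2 * b) (S p.1 * a))); last by bil_tac.
  by apply: eq_bigr => q _ /=; rewrite !AM.
rewrite exchange_big (L1b (f := fun a b => f (S b) (S a))) //.
by bil_tac.
Qed.

Lemma AC3 (V : lmodType K) (f : H -> H -> H -> V) : trilin f -> forall w,
  sw3 cop f (S w) = sw3 cop (fun x y z => f (S z) (S y) (S x)) w.
Proof.
move=> hf w; rewrite /sw3.
rewrite (AC2 (f := fun a b => \sum_(q <- cop a) f q.1 q.2 b)); last by bil_tac.
rewrite (CA (f := fun x y z => f (S z) (S y) (S x))); last by tri_tac.
apply: eq_bigr => p _ /=.
by rewrite (AC2 (f := fun a b => f a b (S p.1))) //; bil_tac.
Qed.


Variables (A : algType K) (pi : H -> A).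
Hypotheses (piL : lin_map pi) (P1h : PR1 pi) (P2h : PR2 cop S pi) (P3h : PR3 cop S pi)
  (P4h : PR4 cop S pi) (P5h : PR5 cop S pi).

Definition aa := \sum_(p <- cop 1) pi p.1 * pi (S p.2).
Definition bb := \sum_(p <- cop 1) pi (S p.1) * pi p.2.

Lemma Xa h : sw3 cop (fun x y z => pi x * pi (S y) * pi z) h = pi h * aa.
Proof.
rewrite /sw3.
transitivity (\sum_(p <- cop h) \sum_(q <- cop p.1) pi q.1 * pi (S q.2 * p.2)).
  by apply: eq_bigr => p _; exact: P4h.
rewrite (CA (f := fun x y z => pi x * pi (S y * z))); last by tri_tac.
transitivity (\sum_(p <- cop h) pi p.1 * pi (es p.2)).
  by apply: eq_bigr => p _ /=; rewrite /es -(wh_S_src W) (lin_sum piL) mulr_sumr.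
rewrite (C (f := fun u v => pi u * pi v)); last by bil_tac.
rewrite /= -P2h /aa mulr_sumr; apply: eq_bigr => q _.
by rewrite mulrA.
Qed.

Lemma Xb h : sw3 cop (fun x y z => pi x * pi (S y) * pi z) h = bb * pi h.
Proof.
rewrite /sw3 (CA (f := fun x y z => pi x * pi (S y) * pi z)); last by tri_tac.
transitivity (\sum_(p <- cop h) \sum_(q <- cop p.2) pi (p.1 * S q.1) * pi q.2).
  by apply: eq_bigr => p _; exact: P3h.
rewrite -(CA (f := fun x y z => pi (x * S y) * pi z)); last by tri_tac.
transitivity (\sum_(p <- cop h) pi (et p.1) * pi p.2).
  by apply: eq_bigr => p _ /=; rewrite /et -(wh_S_tgt W) (lin_sum piL) mulr_suml.
rewrite (I2 (f := fun u v => pi u * pi v)); last by bil_tac.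
by rewrite /= -P5h /bb mulr_suml.
Qed.

Lemma Yt h : sw3 cop (fun x y z => pi (S x) * pi y * pi (S z)) h =
  \sum_(p <- cop h) pi (S p.1) * pi (et p.2).
Proof.
rewrite /sw3.
transitivity (\sum_(p <- cop h) \sum_(q <- cop p.1) pi (S q.1) * pi (q.2 * S p.2)).
  by apply: eq_bigr => p _; exact: P5h.
rewrite (CA (f := fun x y z => pi (S x) * pi (y * S z))); last by tri_tac.
by apply: eq_bigr => p _ /=; rewrite /et -(wh_S_tgt W) (lin_sum piL) mulr_sumr.
Qed.

Lemma piE (ha : aa = 1) z : pi z = \sum_(r <- cop 1) pi (z * r.1) * pi (S r.2).
Proof.
rewrite -P2h; transitivity (pi z * aa); first by rewrite ha mulr1.
by rewrite /aa mulr_sumr; apply: eq_bigr => r _; rewrite mulrA.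
Qed.

Lemma Mlem (ha : aa = 1) u (c : H -> K) : slin c ->
  \sum_(q <- cop 1) c q.1 *: (pi u * pi q.2) = \sum_(q <- cop 1) c q.1 *: pi (u * q.2).
Proof.
move=> hc.
transitivity (\sum_(q <- cop 1) \sum_(r <- cop 1)
  (fun a' b' c' => c a' *: (pi u * pi b' * pi (S c'))) q.1 (q.2 * r.1) r.2).
  apply: eq_bigr => q _ /=; rewrite {1}(piE ha q.2) mulr_sumr scaler_sumr.
  by apply: eq_bigr => r _; rewrite mulrA.
rewrite -(UR (f := fun a' b' c' => c a' *: (pi u * pi b' * pi (S c')))); last by tri_tac.
rewrite (CA (f := fun a' b' c' => c a' *: (pi u * pi b' * pi (S c')))); last by tri_tac.
transitivity (\sum_(q <- cop 1) \sum_(r <- cop q.2)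
  (fun a' b' c' => c a' *: (pi (u * b') * pi (S c'))) q.1 r.1 r.2).
  apply: eq_bigr => q _ /=; rewrite -!scaler_sumr; congr (_ *: _).
  exact: P2h.
rewrite -(CA (f := fun a' b' c' => c a' *: (pi (u * b') * pi (S c')))); last by tri_tac.
rewrite (UR (f := fun a' b' c' => c a' *: (pi (u * b') * pi (S c')))); last by tri_tac.
apply: eq_bigr => q _ /=; rewrite (piE ha (u * q.2)) scaler_sumr.
by apply: eq_bigr => r _; rewrite mulrA.
Qed.

Lemma P2toP4 (ha : aa = 1) h :
  pi (S h) = sw3 cop (fun x y z => pi (S x) * pi y * pi (S z)) h.
Proof.
rewrite Yt.
transitivity (\sum_(p <- cop h) \sum_(q <- cop 1) eps (q.1 * p.2) *: pi (S p.1 * q.2)).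
  rewrite (SSt h) (lin_sum piL); apply: eq_bigr => p _.
  rewrite /et mulr_sumr (lin_sum piL); apply: eq_bigr => q _.
  by rewrite -scalerAr (linZ piL).
apply: eq_bigr => p _.
rewrite -(Mlem ha (S p.1) (c := fun a' => eps (a' * p.2))); last by slin_tac.
rewrite /et (lin_sum piL) mulr_sumr; apply: eq_bigr => q _.
by rewrite (linZ piL) scalerAr.
Qed.


Lemma main_thm :
  let P1 := forall h, pi h = sw3 cop (fun x y z => pi x * pi (S y) * pi z) h in
  let P2 := \sum_(p <- cop 1) pi p.1 * pi (S p.2) = 1 in
  let P3 := \sum_(p <- cop 1) pi (S p.1) * pi p.2 = 1 in
  let P4 := forall h, pi (S h) = sw3 cop (fun x y z => pi (S x) * pi y * pi (S z)) h in
  ((P1 <-> P2) /\ (P1 <-> P3) /\ (P1 <-> P4)) /\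
  (forall Sinv : H -> H, cancel S Sinv -> cancel Sinv S ->
    let P5 := forall h, pi h = sw3 cop (fun x y z => pi z * pi (Sinv y) * pi x) h in
    let P6 := \sum_(p <- cop 1) pi (Sinv p.2) * pi p.1 = 1 in
    let P7 := \sum_(p <- cop 1) pi p.2 * pi (Sinv p.1) = 1 in
    (P1 <-> P5) /\ (P1 <-> P6) /\ (P1 <-> P7)).
Proof.
cbv zeta.
have p1 : pi 1 = 1 by exact: P1h.
have E12 : (forall h, pi h = sw3 cop (fun x y z => pi x * pi (S y) * pi z) h) <-> aa = 1.
  split.
  - by move=> hP1; have := hP1 1; rewrite Xa p1 mul1r => <-.
  - by move=> ha h; rewrite Xa ha mulr1.
have E13 : (forall h, pi h = sw3 cop (fun x y z => pi x * pi (S y) * pi z) h) <-> bb = 1.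
  split.
  - by move=> hP1; have := hP1 1; rewrite Xb p1 mulr1 => <-.
  - by move=> hb h; rewrite Xb hb mul1r.
have E14 : (forall h, pi h = sw3 cop (fun x y z => pi x * pi (S y) * pi z) h) <->
    (forall h, pi (S h) = sw3 cop (fun x y z => pi (S x) * pi y * pi (S z)) h).
  split.
  - by move/E12 => ha h; exact: P2toP4.
  - move=> hP4; apply/E13.
    have := hP4 1; rewrite S1 p1 Yt => ->.
    rewrite (L2a (f := fun u v => pi (S u) * pi v)) //; by bil_tac.
split; first by split; [exact: E12 | split; [exact: E13 | exact: E14]].
move=> Sinv hSS hSS'.
have SiL : lin_map Sinv.
  move=> k x y; apply: (can_inj hSS).
  by rewrite hSS' SL !hSS'.
split; last split.
- apply: (iff_trans E14); split.
  + move=> hP4 h; rewrite -(hSS' h) hP4 AC3; last by tri_tac.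
    by rewrite /sw3; apply: eq_bigr => p _; apply: eq_bigr => q _ /=; rewrite hSS.
  + move=> hP5 h; rewrite hP5 AC3; last by tri_tac.
    by rewrite /sw3; apply: eq_bigr => p _; apply: eq_bigr => q _ /=; rewrite hSS.
- have -> : \sum_(p <- cop 1) pi (Sinv p.2) * pi p.1 = aa.
    rewrite -(D (f := fun u v => pi (Sinv u) * pi v)); last by bil_tac.
    by apply: eq_bigr => p _ /=; rewrite hSS.
  exact: E12.
- have -> : \sum_(p <- cop 1) pi p.2 * pi (Sinv p.1) = bb.
    rewrite -(D (f := fun u v => pi u * pi (Sinv v))); last by bil_tac.
    by apply: eq_bigr => p _ /=; rewrite hSS.
  exact: E13.
Qed.

End WH.

Unset Implicit Arguments. Set Strict Implicit. Set Printing Implicit Defensive.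

Theorem proposition3p2 (K : fieldType) (H : algType K) (cop : H -> seq (H * H))
  (eps : H -> K) (S : H -> H) (A : algType K) (pi : H -> A) :
  is_weak_hopf cop eps S ->
  lin_map pi ->
  PR1 pi -> PR2 cop S pi -> PR3 cop S pi -> PR4 cop S pi -> PR5 cop S pi ->
  let P1 := forall h, pi h = sw3 cop (fun x y z => pi x * pi (S y) * pi z) h in
  let P2 := \sum_(p <- cop 1) pi p.1 * pi (S p.2) = 1 in
  let P3 := \sum_(p <- cop 1) pi (S p.1) * pi p.2 = 1 in
  let P4 := forall h, pi (S h) = sw3 cop (fun x y z => pi (S x) * pi y * pi (S z)) h in
  ((P1 <-> P2) /\ (P1 <-> P3) /\ (P1 <-> P4)) /\
  (forall Sinv : H -> H, cancel S Sinv -> cancel Sinv S ->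
    let P5 := forall h, pi h = sw3 cop (fun x y z => pi z * pi (Sinv y) * pi x) h in
    let P6 := \sum_(p <- cop 1) pi (Sinv p.2) * pi p.1 = 1 in
    let P7 := \sum_(p <- cop 1) pi p.2 * pi (Sinv p.1) = 1 in
    (P1 <-> P5) /\ (P1 <-> P6) /\ (P1 <-> P7)).
Proof.
move=> hW hpi h1 h2 h3 h4 h5.
exact: (main_thm hW hpi h1 h2 h3 h4 h5).
Qed.
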